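(* Let $s\ge2$, $\delta\ge2$, and let $\mathcal{C}$ be an $[n,k,d]_q$ linear code with multiple $(r_i,\delta)_{i\in[s]}$ localities (i.e. $\delta_1=\dots=\delta_s=\delta$) with respect to a partition $\mathcal{T}_1,\dots,\mathcal{T}_s$ of $[n]$, $n_i=|\mathcal{T}_i|$, $r_1\le\dots\le r_s$. Let $\Delta_0=0$ and $\Delta_j=\sum_{i=1}^{j}\lceil n_i/(r_i+\delta-1)\rceil(\delta-1)$ for $j=1,\dots,s-1$. Suppose $\sum_{i=1}^{s-1}r_i\lceil n_i/(r_i+\delta-1)\rceil\le k-1$ and, for each $j=1,\dots,s-1$, $$r_j\left\lceil\frac{\Delta_j-\Delta_{j-1}-1}{\delta-1}\right\rceil+(\Delta_j-\Delta_{j-1}-1)<n_j.$$ Then $d\le n-k+1-(\Gamma-1)(\delta-1)$, where $$\Gamma=\sum_{i=1}^{s-1}\left\lceil\frac{n_i}{r_i+\delta-1}\right\rceil+\left\lceil\frac{k-\sum_{i=1}^{s-1}r_i\lceil n_i/(r_i+\delta-1)\rceil}{r_s}\right\rceil.$$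
   Context: $[n]=\{1,\dots,n\}$. For an $[n,k,d]_q$ linear code with generator matrix columns $\vec g_1,\dots,\vec g_n$, a regenerating set of coordinate $i$ is a (minimal) subset $R\subseteq[n]$ with $i\in R$ such that $\vec g_i$ is an $\mathbb{F}_q$-linear combination of $\{\vec g_j\}_{j\in R\setminus\{i\}}$ and no proper subset of $R\setminus\{i\}$ suffices; $\mathcal{R}_i$ is the set of regenerating sets of coordinate $i$. Multiple $(r_i,\delta)_{i\in[s]}$ localities: $\mathcal{T}_1,\dots,\mathcal{T}_s$ is a partition of $[n]$, $r_1\le\dots\le r_s$ are integers, and for each $i\in[s]$ and each $\iota\in\mathcal{T}_i$ there is $S_\iota\subseteq\mathcal{T}_i$ with $\iota\in S_\iota$, $\delta\le|S_\iota|\le r_i+\delta-1$, such that for every $E\subseteq S_\iota$ with $|E|=\delta-1$ and every $j\in E$, $(S_\iota\setminus E)\cup\{j\}\in\mathcal{R}_j$. *)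

(* Defs.v *)
From HB Require Import structures.
From mathcomp Require Import all_boot all_order all_algebra all_field.
Set Implicit Arguments. Unset Strict Implicit. Unset Printing Implicit Defensive.
Import GRing.Theory.
Local Open Scope ring_scope.

Definition ceildiv (a b : nat) : nat := ((a + b).-1 %/ b)%N.

Section Codes.
Variables (F : finFieldType) (k n : nat) (G : 'M[F]_(k, n)).

Definition wt (v : 'rV[F]_n) : nat := #|[set j : 'I_n | v 0 j != 0]|.

Definition is_min_dist (d : nat) : Prop :=
  (exists m : 'rV[F]_k, m *m G != 0 /\ wt (m *m G) = d) /\
  (forall m : 'rV[F]_k, m *m G != 0 -> (d <= wt (m *m G))%N).

Definition in_col_span (v : 'cV[F]_k) (S : {set 'I_n}) : Prop :=
  exists c : 'I_n -> F, v = \sum_(j in S) c j *: col j G.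

Definition regen_set (i : 'I_n) (R : {set 'I_n}) : Prop :=
  i \in R /\ in_col_span (col i G) (R :\ i) /\
  (forall S : {set 'I_n}, S \proper (R :\ i) -> ~ in_col_span (col i G) S).

(* Multiple (r_i, delta)_{i in [s]} localities w.r.t. T_1..T_s (1-based) *)
Definition multiple_localities (s : nat) (T : nat -> {set 'I_n})
  (r : nat -> nat) (delta : nat) : Prop :=
  (forall i, (1 <= i <= s)%N -> T i != set0) /\
  (forall i j, (1 <= i <= s)%N -> (1 <= j <= s)%N -> i <> j ->
      [disjoint T i & T j]) /\
  (forall x : 'I_n, exists i, (1 <= i <= s)%N /\ x \in T i) /\
  (forall i, (1 <= i <= s)%N -> (0 < r i)%N) /\
  (forall i j, (1 <= i)%N -> (i <= j <= s)%N -> (r i <= r j)%N) /\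
  (forall i, (1 <= i <= s)%N -> forall iota, iota \in T i ->
     exists S : {set 'I_n}, S \subset T i /\ iota \in S /\
       (delta <= #|S| <= r i + delta - 1)%N /\
       forall E : {set 'I_n}, E \subset S -> #|E| = delta.-1 ->
         forall j, j \in E -> regen_set j ((S :\: E) :|: [set j])).

End Codes.

Definition Delta (nT r : nat -> nat) (delta j : nat) : nat :=
  (\sum_(1 <= i < j.+1) ceildiv (nT i) (r i + delta - 1) * (delta - 1))%N.

Definition Gamma (nT r : nat -> nat) (delta s k : nat) : nat :=
  (\sum_(1 <= i < s) ceildiv (nT i) (r i + delta - 1) +
   ceildiv (k - \sum_(1 <= i < s) r i * ceildiv (nT i) (r i + delta - 1)) (r s))%N.

(* Main.v *)
Require Import Defs.
From mathcomp Require Import all_boot all_order all_algebra all_field.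
From mathcomp Require Import zify.
Set Implicit Arguments. Unset Strict Implicit. Unset Printing Implicit Defensive.
Import GRing.Theory.
Local Open Scope ring_scope.

Definition Mx (F : finFieldType) k n (G : 'M[F]_(k,n)) (X : {set 'I_n}) : 'M[F]_(n,k) :=
  \matrix_(j < n, l < k) (if j \in X then G l j else 0%R).

Lemma rowMx (F : finFieldType) k n (G : 'M[F]_(k,n)) (X : {set 'I_n}) j :
  row j (Mx G X) = if j \in X then (col j G)^T else 0%R.
Proof. by apply/rowP => l; rewrite !mxE; case: (j \in X); rewrite ?mxE. Qed.

Lemma sub_by_cols (F : finFieldType) k n (G : 'M[F]_(k,n)) (X Y : {set 'I_n}) :
  (forall j, j \in Y -> ((col j G)^T <= Mx G X)%MS) -> (Mx G Y <= Mx G X)%MS.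
Proof.
move=> H; apply/row_subP => j; rewrite rowMx; case: ifP => hj; first exact: H.
exact: sub0mx.
Qed.

Lemma col_in (F : finFieldType) k n (G : 'M[F]_(k,n)) (X : {set 'I_n}) j :
  j \in X -> ((col j G)^T <= Mx G X)%MS.
Proof. by move=> hj; have := row_sub j (Mx G X); rewrite rowMx hj. Qed.

Lemma MxS (F : finFieldType) k n (G : 'M[F]_(k,n)) (X Y : {set 'I_n}) :
  X \subset Y -> (Mx G X <= Mx G Y)%MS.
Proof. by move=> /subsetP sXY; apply: sub_by_cols => j /sXY; apply: col_in. Qed.

Lemma MxU (F : finFieldType) k n (G : 'M[F]_(k,n)) (X Y : {set 'I_n}) :
  (Mx G (X :|: Y) <= Mx G X + Mx G Y)%MS.
Proof.
apply/row_subP => j; rewrite rowMx; case: ifP => hj; last exact: sub0mx.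
move: hj; rewrite inE => /orP [] h.
  exact: submx_trans (col_in G h) (addsmxSl _ _).
exact: submx_trans (col_in G h) (addsmxSr _ _).
Qed.

Lemma rankU (F : finFieldType) k n (G : 'M[F]_(k,n)) (X Y : {set 'I_n}) :
  (\rank (Mx G (X :|: Y)) <= \rank (Mx G X) + \rank (Mx G Y))%N.
Proof.
exact: leq_trans (mxrankS (MxU G X Y)) (mxrank_adds_leqif _ _).
Qed.

Lemma Mx0 (F : finFieldType) k n (G : 'M[F]_(k,n)) : Mx G set0 = 0%R.
Proof. by apply/matrixP => i j; rewrite !mxE inE. Qed.

Lemma MxT (F : finFieldType) k n (G : 'M[F]_(k,n)) : Mx G setT = G^T.
Proof. by apply/matrixP => i j; rewrite !mxE inE. Qed.

Lemma rank1 (F : finFieldType) k n (G : 'M[F]_(k,n)) j :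
  (\rank (Mx G [set j]) <= 1)%N.
Proof.
have : (Mx G [set j] <= (col j G)^T)%MS.
  apply/row_subP => l; rewrite rowMx inE; case: eqP => [->|_]; first exact: submx_refl.
  exact: sub0mx.
by move/mxrankS/leq_trans; apply; apply: rank_leq_row.
Qed.

Lemma rank_card (F : finFieldType) k n (G : 'M[F]_(k,n)) (X : {set 'I_n}) :
  (\rank (Mx G X) <= #|X|)%N.
Proof.
move: {2}#|X| (erefl #|X|) => m; elim: m X => [|m IH] X hX.
  by move: hX => /eqP; rewrite cards_eq0 => /eqP ->; rewrite Mx0 mxrank0.
have : (0 < #|X|)%N by rewrite hX.
case/card_gt0P => x hx.
have hX' : #|X :\ x| = m by move: hX; rewrite (cardsD1 x X) hx => -[].
rewrite -{1}(setD1K hx).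
apply: leq_trans (rankU _ _ _) _.
have := rank1 G x; have := IH (X :\ x) hX'.
rewrite hX; lia.
Qed.

Lemma span_sub (F : finFieldType) k n (G : 'M[F]_(k,n)) v (A B : {set 'I_n}) :
  in_col_span G v A -> A \subset B -> (v^T <= Mx G B)%MS.
Proof.
move=> [c ->] /subsetP sAB.
elim/big_rec: _ => [|i x hi hx]; first by rewrite trmx0 sub0mx.
rewrite linearD /= addmx_sub //= linearZ /= scalemx_sub //.
exact: col_in (sAB _ hi).
Qed.

Lemma kernel_vec (F : finFieldType) k n (G : 'M[F]_(k,n)) (X : {set 'I_n}) :
  (\rank (Mx G X) < k)%N ->
  exists m : 'rV[F]_k, m != 0 /\ forall j, j \in X -> (m *m G) 0 j = 0.
Proof.
move=> hr.
set K := kermx (Mx G X)^T.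
have hK : K != 0.
  by rewrite -mxrank_eq0 /K mxrank_ker mxrank_tr; apply/eqP; lia.
have [i hi] : exists i, row i K != 0.
  apply/existsP; apply: contraR hK; rewrite negb_exists => /forallP h.
  by apply/eqP/row_matrixP => i; rewrite row0; apply/eqP; have := h i; rewrite negbK.
exists (row i K); split=> // j hj.
have h0 : K *m (Mx G X)^T = 0 by exact: mulmx_ker.
have : (row i K *m (Mx G X)^T) 0 j = 0.
  by rewrite -row_mul h0 !mxE.
move=> h; rewrite -[X in _ = X]h !mxE; by apply: eq_bigr => l _; rewrite !mxE hj.
Qed.

Lemma kernel_wt (F : finFieldType) k n (G : 'M[F]_(k,n)) (X : {set 'I_n}) d :
  row_free G -> is_min_dist G d -> (\rank (Mx G X) < k)%N -> (d + #|X| <= n)%N.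
Proof.
move=> hf [_ hd] hr.
have [m [hm0 hmX]] := kernel_vec hr.
have hmG : m *m G != 0 by rewrite mulmx_free_eq0.
have := hd m hmG; rewrite /wt => hd'.
have : (#|[set j : 'I_n | (m *m G) 0%R j != 0%R]| <= #|~: X|)%N.
  apply: subset_leq_card; apply/subsetP => j; rewrite !inE; apply: contra => hj.
  by rewrite hmX.
have := cardsC X; rewrite card_ord; move=> h1 h2; have := leq_trans hd' h2; lia.
Qed.

Lemma exists_out (F : finFieldType) k n (G : 'M[F]_(k,n)) (X : {set 'I_n}) :
  row_free G -> (\rank (Mx G X) < k)%N ->
  exists j, ~~ ((col j G)^T <= Mx G X)%MS.
Proof.
move=> hf hr.
apply/existsP; rewrite -negb_forall; apply/negP => /forallP hall.
have : (Mx G setT <= Mx G X)%MS by apply: sub_by_cols => j _; exact: hall.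
move/mxrankS; rewrite MxT mxrank_tr.
by move: hf; rewrite /row_free => /eqP ->; lia.
Qed.

Lemma final_bound (F : finFieldType) k n (G : 'M[F]_(k,n)) (X : {set 'I_n}) d D :
  row_free G -> is_min_dist G d -> (\rank (Mx G X) < k)%N ->
  (\rank (Mx G X) + D <= #|X|)%N -> (d + D + k <= n + 1)%N.
Proof.
move=> hf hd.
move: {2}(n - #|X|)%N (leqnn (n - #|X|)) => t; elim: t X => [|t IH] X ht hr hD.
  case: (ltnP (\rank (Mx G X)).+1 k) => hk; last by have := kernel_wt hf hd hr; lia.
  have [j hj] := exists_out hf hr.
  have hjX : j \notin X by apply: contra hj; exact: col_in.
  have hc : #|j |: X| = (#|X|).+1 by rewrite cardsU1 hjX.
  have hcn : (#|j |: X| <= n)%N by apply: leq_trans (max_card _) _; rewrite card_ord.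
  lia.
case: (ltnP (\rank (Mx G X)).+1 k) => hk; last by have := kernel_wt hf hd hr; lia.
have [j hj] := exists_out hf hr.
have hjX : j \notin X by apply: contra hj; exact: col_in.
have hc : #|j |: X| = (#|X|).+1 by rewrite cardsU1 hjX.
have hcn : (#|j |: X| <= n)%N by apply: leq_trans (max_card _) _; rewrite card_ord.
have hr' : (\rank (Mx G (j |: X)) <= \rank (Mx G [set j]) + \rank (Mx G X))%N := rankU G [set j] X.
have h1 : (\rank (Mx G [set j]) <= 1)%N := rank1 G j.
clear hj hd; apply: (IH (j |: X)); clear IH.
- rewrite hc; lia.
- lia.
- rewrite hc; lia.
Qed.

Lemma subset_between (T : finType) (A S : {set T}) m :
  A \subset S -> (#|A| <= m <= #|S|)%N ->
  exists B : {set T}, A \subset B /\ B \subset S /\ #|B| = m.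
Proof.
move=> hAS; elim: m => [|m IH].
  rewrite leqn0 => /andP [/eqP hA _]; exists A; split=> //.
case/andP => h1 h2.
case: (eqVneq #|A| m.+1) => hA; first by exists A.
have [B [hAB [hBS hB]]] : exists B : {set T}, A \subset B /\ B \subset S /\ #|B| = m.
  apply: IH; apply/andP; split; lia.
have : B \proper S by rewrite properEcard hBS hB.
case/properP => _ [x hxS hxB].
exists (x |: B); split; first exact: subset_trans hAB (subsetUr _ _).
split; first by rewrite subUset sub1set hxS.
by rewrite cardsU1 hxB hB.
Qed.

Definition locg (F : finFieldType) k n (G : 'M[F]_(k,n)) (Ti : {set 'I_n}) (ri delta : nat) :=
  forall iota, iota \in Ti -> exists S : {set 'I_n}, S \subset Ti /\ iota \in S /\
       (delta <= #|S| <= ri + delta - 1)%N /\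
       forall E : {set 'I_n}, E \subset S -> #|E| = delta.-1 ->
         forall j, j \in E -> regen_set G j ((S :\: E) :|: [set j]).

Lemma group_span (F : finFieldType) k n (G : 'M[F]_(k,n)) (S B : {set 'I_n}) delta :
  (forall E : {set 'I_n}, E \subset S -> #|E| = delta.-1 ->
         forall j, j \in E -> regen_set G j ((S :\: E) :|: [set j])) ->
  B \subset S -> (#|B| + delta.-1 = #|S|)%N -> (Mx G S <= Mx G B)%MS.
Proof.
move=> hreg hBS hcard; apply: sub_by_cols => j hjS.
case hjB: (j \in B); first exact: col_in.
have hE : S :\: B \subset S by apply: subsetDl.
have hcE : #|S :\: B| = delta.-1.
  have := cardsID B S; have -> : S :&: B = B by apply/setIidPr.
  lia.
have hjE : j \in S :\: B by rewrite inE hjB hjS.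
have [_ [hspan _]] := hreg _ hE hcE j hjE.
apply: span_sub hspan _.
apply/subsetP => x; rewrite !inE => /andP [hxj /orP [/andP [hxSB hxS]|hx]].
  by move: hxSB; rewrite hxS andbT negbK.
by rewrite (eqP hx) eqxx in hxj.
Qed.

Lemma step_group (F : finFieldType) k n (G : 'M[F]_(k,n)) (X S : {set 'I_n}) delta ri j :
  (1 <= delta)%N -> (delta <= #|S| <= ri + delta - 1)%N ->
  (forall E : {set 'I_n}, E \subset S -> #|E| = delta.-1 ->
         forall j, j \in E -> regen_set G j ((S :\: E) :|: [set j])) ->
  j \in S -> ~~ ((col j G)^T <= Mx G X)%MS ->
  (\rank (Mx G (X :|: S)) <= \rank (Mx G X) + ri)%N /\
  (\rank (Mx G (X :|: S)) + delta.-1 + #|X| <= #|X :|: S| + \rank (Mx G X))%N.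
Proof.
move=> hd /andP [hS1 hS2] hreg hjS hj.
have hSX : (#|S :&: X| + delta <= #|S|)%N.
  rewrite leqNgt; apply/negP => hlt.
  have [B [_ [hB hBc]]] : exists B : {set 'I_n}, set0 \subset B /\ B \subset S :&: X /\ #|B| = (#|S| - delta.-1)%N.
    apply: (subset_between (A := set0) (S := S :&: X)); first exact: sub0set.
    rewrite cards0 /=. clear -hlt hd. set a := #|S :&: X| in hlt *. set b := #|S| in hlt *. lia.
  have hBS : B \subset S by apply: subset_trans hB (subsetIl _ _).
  have hBX : B \subset X by apply: subset_trans hB (subsetIr _ _).
  have := group_span hreg hBS (_ : (#|B| + delta.-1 = #|S|)%N).
  move=> /(_ ltac:(lia)) hsp.
  move/negP: hj; apply.
  exact: submx_trans (col_in G hjS) (submx_trans hsp (MxS G hBX)).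
have [B [hB1 [hB2 hBc]]] : exists B : {set 'I_n}, S :&: X \subset B /\ B \subset S /\ #|B| = (#|S| - delta.-1)%N.
  by apply: subset_between; [exact: subsetIl | lia].
have hsp := group_span hreg hB2 (_ : (#|B| + delta.-1 = #|S|)%N).
have {}hsp := hsp ltac:(lia).
have hsub : (Mx G (X :|: S) <= Mx G (X :|: (B :\: X)))%MS.
  apply: sub_by_cols => l; rewrite inE => /orP [hl|hl].
    by apply: col_in; rewrite inE hl.
  apply: submx_trans (col_in G hl) (submx_trans hsp (MxS G _)).
  apply/subsetP => x hx; rewrite !inE hx; case: (x \in X) => //.
have hr1 := leq_trans (mxrankS hsub) (rankU G X (B :\: X)).
have hr2 := rank_card G (B :\: X).
have hc1 := cardsID X B.
have hc2 : (#|S :&: X| <= #|B :&: X|)%N.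
  apply: subset_leq_card; apply/subsetP => x hx; rewrite inE.
  by rewrite (subsetP hB1 _ hx) /=; move: hx; rewrite inE => /andP [].
have hc3 := cardsU X S.
have hc4 : #|X :&: S| = #|S :&: X| by rewrite setIC.
have hc5 : (#|X :&: S| <= #|X|)%N by apply: subset_leq_card; apply: subsetIl.
split; lia.
Qed.

Lemma phase1 (F : finFieldType) k n (G : 'M[F]_(k,n)) (Ti : {set 'I_n}) ri delta c :
  (1 <= delta)%N -> locg G Ti ri delta ->
  (ri * (c - 1) + c * (delta - 1) <= #|Ti|)%N ->
  exists Y : {set 'I_n}, Y \subset Ti /\ (\rank (Mx G Y) <= c * ri)%N /\
     (\rank (Mx G Y) + c * (delta - 1) <= #|Y|)%N.
Proof.
move=> hd hloc hc.
suff : forall t, (t <= c)%N -> exists Y : {set 'I_n}, Y \subset Ti /\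
   (\rank (Mx G Y) <= t * ri)%N /\
   ((\rank (Mx G Y) + t * (delta - 1) <= #|Y|)%N \/
    (Y = Ti /\ (\rank (Mx G Y) <= (c - 1) * ri)%N)).
  move=> /(_ c (leqnn c)) [Y [hY [hr [h|[-> h]]]]].
    by exists Y.
  exists Ti; split=> //; split.
    by apply: leq_trans h _; rewrite leq_mul2r leq_subr orbT.
  move: hc; rewrite (mulnC ri); lia.
elim=> [|t IH] ht.
  exists set0; rewrite Mx0 mxrank0 cards0; split; [exact: sub0set|split=> //].
  by left.
have [Y [hY [hr hor]]] := IH (ltnW ht).
case: hor => [hex|[hYT hrc]]; last first.
  exists Y; split=> //; split; last by right.
  by apply: leq_trans hr _; rewrite leq_mul2r leqnSn orbT.
case: (boolP [exists j, (j \in Ti) && ~~ ((col j G)^T <= Mx G Y)%MS]).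
  case/existsP => j /andP [hjT hj].
  have [S [hST [hjS [hcS hreg]]]] := hloc j hjT.
  have [h1 h2] := step_group hd hcS hreg hjS hj.
  exists (Y :|: S); split; first by rewrite subUset hY hST.
  rewrite !mulSn; split; first lia.
  left; rewrite -subn1 in h2; lia.
rewrite negb_exists => /forallP hall.
have hsub : (Mx G Ti <= Mx G Y)%MS.
  apply: sub_by_cols => j hj; have := hall j; rewrite hj /= negbK; exact.
exists Ti; split=> //; split.
  apply: leq_trans (mxrankS hsub) _; apply: leq_trans hr _.
  by rewrite leq_mul2r leqnSn orbT.
right; split=> //; apply: leq_trans (mxrankS hsub) _; apply: leq_trans hr _.
by rewrite leq_mul2r; apply/orP; right; lia.
Qed.

Lemma ceil_ge1 a b : (0 < a)%N -> (0 < b)%N -> (1 <= ceildiv a b)%N.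
Proof. by move=> ha hb; rewrite /ceildiv leq_divRL // mul1n; lia. Qed.

Lemma ceil_ub a b : (0 < a)%N -> (0 < b)%N -> ((ceildiv a b - 1) * b < a)%N.
Proof.
move=> ha hb; rewrite /ceildiv mulnBl mul1n.
have := leq_divM (a + b).-1 b; lia.
Qed.

Lemma ceil_lb c b : (1 <= b)%N ->
  (c - 1 <= ceildiv (c * b - 1) b)%N.
Proof.
move=> hb; rewrite /ceildiv leq_divRL // mulnBl mul1n.
case: c => [|c]; first by rewrite mul0n.
rewrite mulSn; lia.
Qed.

Lemma locality_fact (nT r : nat -> nat) delta j :
  (2 <= delta)%N -> (1 <= j)%N ->
  (r j * ceildiv (Delta nT r delta j - Delta nT r delta j.-1 - 1) (delta - 1)
       + (Delta nT r delta j - Delta nT r delta j.-1 - 1) < nT j)%N ->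
  (r j * (ceildiv (nT j) (r j + delta - 1) - 1) +
   ceildiv (nT j) (r j + delta - 1) * (delta - 1) <= nT j)%N.
Proof.
move=> hd hj.
set c := ceildiv (nT j) (r j + delta - 1).
have hD : (Delta nT r delta j - Delta nT r delta j.-1 = c * (delta - 1))%N.
  by rewrite /Delta prednK // big_nat_recr //= addnC addnK.
move=> h; rewrite hD in h.
have hl := ceil_lb c (_ : 1 <= delta - 1)%N.
have {}hl := hl ltac:(lia).
have hm : (r j * (c - 1) <= r j * ceildiv (c * (delta - 1) - 1) (delta - 1))%N.
  by rewrite leq_mul2l hl orbT.
lia.
Qed.

Local Close Scope ring_scope.

Theorem corollary1 (F : finFieldType) (n k d s delta : nat)
  (G : 'M[F]_(k, n)) (T : nat -> {set 'I_n}) (r : nat -> nat) :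
  (2 <= s)%N -> (2 <= delta)%N ->
  row_free G ->
  is_min_dist G d ->
  multiple_localities G s T r delta ->
  let nT := fun i => #|T i| in
  (\sum_(1 <= i < s) r i * ceildiv (nT i) (r i + delta - 1) + 1 <= k)%N ->
  (forall j, (1 <= j <= s - 1)%N ->
     r j * ceildiv (Delta nT r delta j - Delta nT r delta j.-1 - 1) (delta - 1)
       + (Delta nT r delta j - Delta nT r delta j.-1 - 1) < nT j)%N ->
  (d + (Gamma nT r delta s k - 1) * (delta - 1) + k <= n + 1)%N.
Proof.
move=> hs hd hf hmd [hne [hdisj [hcov [hrpos [hrmono hloc]]]]] nT hk hDel.
have hd1 : (1 <= delta)%N by lia.
pose c i := ceildiv (nT i) (r i + delta - 1).
have hlocg : forall i, (1 <= i <= s)%N -> locg G (T i) (r i) delta.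
  by move=> i hi; exact: hloc.
have Q : forall j, (j <= s - 1)%N -> exists Y : {set 'I_n},
    (forall x, x \in Y -> exists i, (1 <= i <= j)%N /\ x \in T i) /\
    (\rank (Mx G Y) <= \sum_(1 <= i < j.+1) r i * c i)%N /\
    (\rank (Mx G Y) + (\sum_(1 <= i < j.+1) c i) * (delta - 1) <= #|Y|)%N.
  elim=> [|j IH] hj.
    exists set0; rewrite Mx0 mxrank0 cards0 !big_geq //; split; [by move=> x; rewrite inE | by []].
  have [Y [hY [hr he]]] := IH (ltnW hj).
  have hj1 : (1 <= j.+1 <= s)%N by lia.
  have := locality_fact hd (_ : 1 <= j.+1)%N (hDel j.+1 ltac:(lia)).
  move=> /(_ isT) hfact.
  have [Yj [hYj [hrj hej]]] := phase1 hd1 (hlocg _ hj1) hfact.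
  have hI : #|Y :&: Yj| = 0%N.
    apply/eqP; rewrite cards_eq0; apply/eqP/setP => x; rewrite !inE.
    apply/negP => /andP [hx1 hx2].
    have [i [hi hxi]] := hY x hx1.
    have := hdisj i j.+1 ltac:(lia) hj1 ltac:(lia).
    by move=> hdj; have := disjointFr hdj hxi; rewrite (subsetP hYj x hx2).
  exists (Y :|: Yj); split.
    move=> x; rewrite inE => /orP [hx|hx].
      by have [i [hi hxi]] := hY x hx; exists i; split=> //; lia.
    by exists j.+1; split=> //; [lia | exact: subsetP hYj x hx].
  rewrite !(@big_nat_recr _ _ _ j.+1) //= mulnDl.
  have := rankU G Y Yj; have := cardsU Y Yj; rewrite hI.
  rewrite /c in hrj hej hr he |- *.
  rewrite mulnC in hrj.
  move=> e1 e2.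
  set a1 := \rank (Mx G (Y :|: Yj)) in e1 e2 *. set a2 := \rank (Mx G Y) in e2 hr he *.
  set a3 := \rank (Mx G Yj) in e2 hrj hej *. set a4 := #|Y :|: Yj| in e1 *.
  set a5 := #|Y| in e1 he. set a6 := #|Yj| in e1 hej.
  split; lia.
have [Y [_ [hrY heY]]] := Q (s - 1)%N (leqnn _).
have hs1 : (s - 1).+1 = s by lia.
rewrite hs1 in hrY heY.
set A := (\sum_(1 <= i < s) r i * c i)%N in hrY hk.
set C := (\sum_(1 <= i < s) c i)%N in heY.
have hA : A = (\sum_(1 <= i < s) r i * ceildiv (nT i) (r i + delta - 1))%N by [].
have {}hk : (A + 1 <= k)%N by rewrite hA.
set g := ceildiv (k - A) (r s).
have hrs : (0 < r s)%N by apply: hrpos; lia.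
have hg1 : (1 <= g)%N by apply: ceil_ge1; lia.
have hgb := ceil_ub (_ : 0 < k - A)%N hrs.
have {}hgb := hgb ltac:(lia); rewrite -/g in hgb.
have P : forall m, (m <= g - 1)%N -> exists X : {set 'I_n},
    (\rank (Mx G X) <= A + m * r s)%N /\
    (\rank (Mx G X) + (C + m) * (delta - 1) <= #|X|)%N.
  elim=> [|m IH] hm.
    by exists Y; rewrite mul0n !addn0; split.
  have [X [hr he]] := IH (ltnW hm).
  have hmr : (m.+1 * r s <= (g - 1) * r s)%N by rewrite leq_mul2r hm orbT.
  have hrk : (\rank (Mx G X) < k)%N by rewrite mulSn in hmr; lia.
  have [j hj] := exists_out hf hrk.
  have [i [hi hji]] := hcov j.
  have [S [hST [hjS [hcS hreg]]]] := hloc i hi j hji.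
  have [h1 h2] := step_group hd1 hcS hreg hjS hj.
  have hri : (r i <= r s)%N by apply: hrmono; lia.
  exists (X :|: S); rewrite addnS !mulSn; rewrite -subn1 in h2.
  set a1 := \rank (Mx G (X :|: S)) in h1 h2 *. set a2 := \rank (Mx G X) in h1 h2 hr he *.
  set a4 := #|X :|: S| in h2 *. set a5 := #|X| in h2 he.
  split; lia.
have [X [hr he]] := P (g - 1)%N (leqnn _).
have hrk : (\rank (Mx G X) < k)%N by lia.
have := final_bound hf hmd hrk he.
rewrite /Gamma -hA -/C -/g.
have -> : (C + g - 1 = C + (g - 1))%N by lia.
done.
Qed.
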